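(* Let $d\ge2$, $H\le\Sigma_d$, and $x\in A^\omega$. For the action of $V_d(H)$ on $A^\omega$, the germ group $G_x$ is isomorphic to $H_x$ if $x$ is not eventually periodic, and is isomorphic to a semidirect product $H_x\rtimes\mathbb Z$ if $x$ is eventually periodic.
   Context: $A=\{a_1,\dots,a_d\}$; $A^*$, $A^\omega$ are the finite and infinite words, $A^\omega$ with ultrametric $d(x,y)=e^{1-n}$, $n$ the first index where $x,y$ differ; balls are the sets $wA^\omega$, $w\in A^*$. $\Sigma_d$ acts letterwise on $A^\omega$. $V_d(H)$ is the group of homeomorphisms $g$ of $A^\omega$ such that every point lies in a ball $w_1A^\omega$ on which $g$ has the form $w_1y\mapsto w_2\sigma(y)$ for some $w_2\in A^*$, $\sigma\in H$. For a group $\Gamma$ acting on a space and a point $x$, $\Gamma_x$ is the stabilizer of $x$, $N_x\trianglelefteq\Gamma_x$ the subgroup of elements that are the identity on some open neighborhood of $x$, and the *germ group* is $G_x=\Gamma_x/N_x$. For $a\in A$, $H_a=\{\sigma\in H:\sigma(a)=a\}$; for $x=x_1x_2\dots$, the *eventual isotropy group* is $H_x=\bigcap\{H_a: a=x_i\text{ for infinitely many }i\}$. $x$ is *eventually periodic* if $x=u\bar v$ with $u,v\in A^*$, $v$ non-empty, $\bar v=vvv\cdots$. *)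

(* Defs.v *)
From HB Require Import structures.
From mathcomp Require Import all_boot all_order all_algebra all_fingroup.
Set Implicit Arguments. Unset Strict Implicit. Unset Printing Implicit Defensive.

(* Alphabet A = 'I_d; infinite words A^omega = nat -> 'I_d (x_1 is [x 0]);
   finite words A^* = seq 'I_d. *)
Definition word (d : nat) := nat -> 'I_d.

Definition app d (w : seq 'I_d) (y : word d) : word d :=
  fun n => if n < size w then nth (y 0) w n else y (n - size w).

Definition actw d (s : {perm 'I_d}) (y : word d) : word d := fun n => s (y n).

(* x and y agree on the first n letters, i.e. d(x,y) <= e^{-n}, i.e. y lies
   in the ball (x_1..x_n) A^omega *)
Definition agree d (x y : word d) (n : nat) : Prop := forall i, i < n -> x i = y i.

Definition in_ball d (w : seq 'I_d) (z : word d) : Prop :=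
  forall i, i < size w -> z i = nth (z 0) w i.

(* continuity for the ultrametric d(x,y) = e^{1-n} *)
Definition continuous_w d (g : word d -> word d) : Prop :=
  forall x n, exists m, forall y, agree x y m -> agree (g x) (g y) n.

Definition homeo d (g : word d -> word d) : Prop :=
  exists ginv, cancel g ginv /\ cancel ginv g /\ continuous_w g /\ continuous_w ginv.

Definition inV d (H : {group {perm 'I_d}}) (g : word d -> word d) : Prop :=
  homeo g /\
  forall z, exists (w1 w2 : seq 'I_d) (s : {perm 'I_d}),
    s \in H /\ in_ball w1 z /\ forall y, g (app w1 y) = app w2 (actw s y).

Definition inGamma d (H : {group {perm 'I_d}}) (x : word d) (g : word d -> word d) : Prop :=
  inV H g /\ g x = x.

Definition inN d (H : {group {perm 'I_d}}) (x : word d) (g : word d -> word d) : Prop :=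
  inGamma H x g /\ exists n, forall y, agree x y n -> g y = y.

Definition inf_often d (x : word d) (a : 'I_d) : Prop :=
  forall N, exists i, N <= i /\ x i = a.

Definition inHx d (H : {group {perm 'I_d}}) (x : word d) (s : {perm 'I_d}) : Prop :=
  s \in H /\ forall a, inf_often x a -> s a = a.

Definition periodic_word d (v : seq 'I_d) (dflt : 'I_d) : word d :=
  fun n => nth dflt v (n %% size v).

Definition eventually_periodic d (x : word d) : Prop :=
  exists u v : seq 'I_d, 0 < size v /\ x = app u (periodic_word v (x 0)).

(* The germ group G_x = Gamma_x / N_x is isomorphic to a group (K, mul, one)
   described by a carrier predicate inK: there is a homomorphism from Gamma_x
   (with composition) onto K whose kernel is N_x. *)
Definition germ_iso d (H : {group {perm 'I_d}}) (x : word d)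
    (K : Type) (inK : K -> Prop) (mul : K -> K -> K) (one : K) : Prop :=
  exists phi : (word d -> word d) -> K,
    (forall g, inGamma H x g -> inK (phi g)) /\
    (forall k, inK k -> exists g, inGamma H x g /\ phi g = k) /\
    (forall g h, inGamma H x g -> inGamma H x h ->
        phi (fun y => g (h y)) = mul (phi g) (phi h)) /\
    (forall g, inGamma H x g -> (phi g = one <-> inN H x g)).

Definition is_aut_Hx d (H : {group {perm 'I_d}}) (x : word d)
    (alpha alphai : {perm 'I_d} -> {perm 'I_d}) : Prop :=
  (forall h, inHx H x h -> inHx H x (alpha h)) /\
  (forall h, inHx H x h -> inHx H x (alphai h)) /\
  (forall h, inHx H x h -> alpha (alphai h) = h) /\
  (forall h, inHx H x h -> alphai (alpha h) = h) /\
  (forall h k, inHx H x h -> inHx H x k -> alpha (h * k)%g = (alpha h * alpha k)%g).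

Definition zact d (alpha alphai : {perm 'I_d} -> {perm 'I_d}) (n : int)
    (h : {perm 'I_d}) : {perm 'I_d} :=
  match n with
  | Posz k => iter k alpha h
  | Negz k => iter k.+1 alphai h
  end.

Definition sd_mul d (alpha alphai : {perm 'I_d} -> {perm 'I_d})
    (p q : {perm 'I_d} * int) : {perm 'I_d} * int :=
  ((p.1 * zact alpha alphai p.2 q.1)%g, (p.2 + q.2)%R).

(* Main.v *)
Require Import Defs.
From HB Require Import structures.
From mathcomp Require Import all_boot all_order all_algebra all_fingroup.
From mathcomp Require Import zify.
From Stdlib Require Import FunctionalExtensionality ClassicalEpsilon Classical.
Set Implicit Arguments. Unset Strict Implicit. Unset Printing Implicit Defensive.


Section Words.
Variable d : nat.
Implicit Types (x y z : word d) (w u v c : seq 'I_d).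

Definition pref n z : seq 'I_d := mkseq z n.
Definition shift n z : word d := fun i => z (i + n).
Definition sp N x y : word d := fun n => if n < N then x n else y (n - N).
Definition inb w z : bool := pref (size w) z == w.

Lemma size_pref n z : size (pref n z) = n.
Proof. by rewrite size_mkseq. Qed.

Lemma nth_pref a n z i : i < n -> nth a (pref n z) i = z i.
Proof. by move=> h; rewrite nth_mkseq. Qed.

Lemma app_pref N x y : app (pref N x) y = sp N x y.
Proof.
apply: functional_extensionality => n; rewrite /app /sp size_pref.
by case: ifP => // h; rewrite nth_pref.
Qed.

Lemma inbP w z : inb w z <-> forall i, i < size w -> z i = nth (z 0) w i.
Proof.
rewrite /inb; split.
  by move/eqP=> <- i hi; rewrite size_pref in hi *; rewrite nth_pref.
move=> h; apply/eqP; apply: (@eq_from_nth _ (z 0)); first by rewrite size_pref.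
by move=> i; rewrite size_pref => hi; rewrite nth_pref // h.
Qed.

Lemma inb_in_ball w z : inb w z <-> in_ball w z.
Proof. exact: inbP. Qed.

Lemma nth_indep' w (a b : 'I_d) i : i < size w -> nth a w i = nth b w i.
Proof. exact: set_nth_default. Qed.

Lemma app_shift w z : inb w z -> app w (shift (size w) z) = z.
Proof.
move/inbP=> h; apply: functional_extensionality => n; rewrite /app /shift.
case: ifP => hn; first by rewrite (h n hn); apply: set_nth_default.
by have -> : n - size w + size w = n by lia.
Qed.

Lemma shift_app n w y : n <= size w -> shift n (app w y) = app (drop n w) y.
Proof.
move=> hn; apply: functional_extensionality => i; rewrite /shift /app size_drop.
rewrite nth_drop; case: ifP => h1; case: ifP => h2; try lia.
  rewrite addnC; apply: set_nth_default; lia.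
by congr y; lia.
Qed.

Lemma app_nil y : app [::] y = y.
Proof. by apply: functional_extensionality => n; rewrite /app /= subn0. Qed.

Lemma shift_app_size w y : shift (size w) (app w y) = y.
Proof. by rewrite shift_app // drop_size app_nil. Qed.

Lemma app_cat w1 w2 y : app (w1 ++ w2) y = app w1 (app w2 y).
Proof.
apply: functional_extensionality => n; rewrite /app size_cat nth_cat.
case: (ltnP n (size w1)) => h1.
  rewrite ifT; last lia. by apply: set_nth_default.
case: (ltnP n (size w1 + size w2)) => h2.
  rewrite ifT; last lia. by apply: set_nth_default; lia.
rewrite ifF; last lia. by congr y; lia.
Qed.

Lemma actw_app (s : {perm 'I_d}) w y : actw s (app w y) = app (map s w) (actw s y).
Proof.
apply: functional_extensionality => n; rewrite /actw /app size_map.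
case: ifP => h //. by rewrite (nth_map (y 0)).
Qed.

Lemma actw1 y : actw 1%g y = y.
Proof. by apply: functional_extensionality => n; rewrite /actw perm1. Qed.

Lemma actwM (s t : {perm 'I_d}) y : actw s (actw t y) = actw (t * s)%g y.
Proof. by apply: functional_extensionality => n; rewrite /actw permM. Qed.

Lemma pref_app n w y : n <= size w -> pref n (app w y) = take n w.
Proof.
move=> hn; apply: (@eq_from_nth _ (y 0)); first by rewrite size_pref size_takel.
move=> i; rewrite size_pref => hi; rewrite nth_pref // nth_take // /app ifT //; lia.
Qed.

Lemma inb_app w w1 y : size w <= size w1 -> inb w (app w1 y) = (take (size w) w1 == w).
Proof. by move=> h; rewrite /inb pref_app. Qed.

Lemma take_pref m n z : m <= n -> take m (pref n z) = pref m z.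
Proof.
move=> h; apply: (@eq_from_nth _ (z 0)); first by rewrite size_takel ?size_pref.
move=> i; rewrite size_takel ?size_pref // => hi'.
by rewrite nth_take // !nth_pref //; lia.
Qed.

Lemma inb_pref w K z y : size w <= K -> inb w (app (pref K z) y) = inb w z.
Proof. by move=> h; rewrite inb_app ?size_pref // take_pref. Qed.

Lemma inb_pref_self K z : inb (pref K z) z.
Proof. by rewrite /inb size_pref. Qed.

End Words.


Section Maps.
Variable d : nat.
Implicit Types (x y z : word d) (w u v c : seq 'I_d).

Definition locform (P : {perm 'I_d} -> Prop) (g : word d -> word d) :=
  forall z, exists w1 w2 s, P s /\ in_ball w1 z /\ forall y, g (app w1 y) = app w2 (actw s y).

Lemma locform_cont P g : locform P g -> continuous_w g.
Proof.
move=> hg x n; have [w1 [w2 [s [_ [hb he]]]]] := hg x.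
exists (size w1 + n) => y hxy.
have hby : inb w1 y.
  apply/inbP => i hi; rewrite -hxy; last lia.
  move/inb_in_ball/inbP: hb => hb; rewrite hb //; apply: set_nth_default; done.
move/inb_in_ball: hb => hb.
rewrite -(app_shift hb) -(app_shift hby) !he => i hi; rewrite /app /actw.
case: ifP => // hi2; rewrite /shift hxy //; lia.
Qed.

Lemma locform_homeo P Q g ginv : locform P g -> locform Q ginv ->
  cancel g ginv -> cancel ginv g -> homeo g.
Proof.
move=> h1 h2 c1 c2; exists ginv; split=> //; split=> //; split.
  exact: locform_cont h1. exact: locform_cont h2.
Qed.

Lemma inb_app_self w y : inb w (app w y).
Proof. by rewrite inb_app // take_size. Qed.

Lemma inb_cat_app w1 w2 y : inb (w1 ++ w2) (app w1 y) = inb w2 y.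
Proof.
apply/idP/idP.
  move/inbP=> h; apply/inbP => i hi.
  have := h (size w1 + i); rewrite size_cat => /(_ ltac:(lia)).
  rewrite nth_cat ifF; last lia. rewrite addKn /app ifF; last lia.
  rewrite addKn => ->; apply: set_nth_default; done.
move/inbP=> h; apply/inbP => i; rewrite size_cat nth_cat /app => hi.
case: ifP => h1; first by apply: set_nth_default.
rewrite h; last lia. apply: set_nth_default; lia.
Qed.

Lemma inb_catl w1 w2 z : inb (w1 ++ w2) z -> inb w1 z.
Proof.
move/inbP=> h; apply/inbP => i hi; rewrite h ?size_cat; last lia.
by rewrite nth_cat hi.
Qed.

Lemma shift_cat_app w1 w2 y : shift (size (w1 ++ w2)) (app w1 (app w2 y)) = y.
Proof. by rewrite -app_cat shift_app_size. Qed.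

Variables (u c v : seq 'I_d).
Hypothesis disj : forall z, inb u z -> inb c z -> False.

Definition Tm (s : {perm 'I_d}) z :=
  if inb (u ++ v) z then app u (actw s (shift (size (u ++ v)) z))
  else if inb u z then app c (shift (size u) z)
  else if inb c z then app c (app v (shift (size c) z))
  else z.

Definition Sm (s : {perm 'I_d}) z :=
  if inb u z then app u (app v (actw s (shift (size u) z)))
  else if inb (c ++ v) z then app c (shift (size (c ++ v)) z)
  else if inb c z then app u (shift (size c) z)
  else z.

Lemma actwK (s : {perm 'I_d}) y : actw s^-1 (actw s y) = y.
Proof. by apply: functional_extensionality => n; rewrite /actw permK. Qed.
Lemma actwKV (s : {perm 'I_d}) y : actw s (actw s^-1 y) = y.
Proof. by apply: functional_extensionality => n; rewrite /actw permKV. Qed.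

Lemma notinb_u_c z : inb c z -> inb u z = false.
Proof. by move=> hc; apply/negP => hu; apply: (disj hu hc). Qed.

Lemma TSK s : cancel (Tm s) (Sm s^-1).
Proof.
move=> z; rewrite /Tm.
case: ifP => h1.
  by rewrite /Sm inb_app_self shift_app_size actwK -app_cat app_shift.
have hu0 : forall y, inb u (app c y) = false by move=> y; apply: notinb_u_c; apply: inb_app_self.
case: ifP => h2.
  rewrite /Sm hu0 inb_cat_app.
  have -> : inb v (shift (size u) z) = false.
    by rewrite -(app_shift h2) inb_cat_app in h1.
  by rewrite inb_app_self shift_app_size app_shift.
case: ifP => h3.
  by rewrite /Sm hu0 -app_cat inb_app_self shift_app_size app_shift // ?(inb_catl h3).
rewrite /Sm h2 h3; case: ifP => // h4; move: (inb_catl h4); by rewrite h3.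
Qed.

Lemma STK s : cancel (Sm s^-1) (Tm s).
Proof.
move=> z; rewrite /Sm.
case: ifP => h1.
  by rewrite /Tm -app_cat inb_app_self shift_app_size actwKV app_shift.
have hu0 : forall y, inb u (app c y) = false by move=> y; apply: notinb_u_c; apply: inb_app_self.
case: ifP => h2.
  rewrite /Tm hu0 inb_app_self shift_app_size.
  have -> : inb (u ++ v) (app c (shift (size (c ++ v)) z)) = false.
    by apply/negP => /inb_catl; rewrite hu0.
  by rewrite -app_cat app_shift.
case: ifP => h3.
  rewrite /Tm inb_cat_app inb_app_self shift_app_size.
  have -> : inb v (shift (size c) z) = false.
    by rewrite -(app_shift h3) inb_cat_app in h2.
  by rewrite app_shift.
rewrite /Tm h1 h3; case: ifP => // h4; move: (inb_catl h4); by rewrite h1.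
Qed.

Lemma locform_T s : locform (fun t => t = s \/ t = 1%g) (Tm s).
Proof.
move=> z; set K := size u + size v + size c; set w1 := pref K z.
have hK : forall w, size w <= K -> forall y, inb w (app w1 y) = inb w z.
  by move=> w hw y; rewrite inb_pref.
have hs : forall y, size w1 = K by move=> _; rewrite size_pref.
have huv : size (u ++ v) <= K by rewrite size_cat /K; lia.
have hu : size u <= K by rewrite /K; lia.
have hc : size c <= K by rewrite /K; lia.
case h1: (inb (u ++ v) z).
  exists w1, (u ++ map s (drop (size (u ++ v)) w1)), s; split; first by left.
  split; first exact/inb_in_ball/inb_pref_self.
  move=> y; rewrite /Tm hK // h1 shift_app ?size_pref // actw_app app_cat //.
case h2: (inb u z).
  exists w1, (c ++ drop (size u) w1), 1%g; split; first by right.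
  split; first exact/inb_in_ball/inb_pref_self.
  move=> y; rewrite /Tm !hK // h1 h2 shift_app ?size_pref // actw1 app_cat //.
case h3: (inb c z).
  exists w1, (c ++ v ++ drop (size c) w1), 1%g; split; first by right.
  split; first exact/inb_in_ball/inb_pref_self.
  move=> y; rewrite /Tm !hK // h1 h2 h3 shift_app ?size_pref // actw1 !app_cat //.
exists w1, w1, 1%g; split; first by right.
split; first exact/inb_in_ball/inb_pref_self.
by move=> y; rewrite /Tm !hK // h1 h2 h3 actw1.
Qed.

Lemma locform_S s : locform (fun t => t = s \/ t = 1%g) (Sm s).
Proof.
move=> z; set K := size u + size v + size c; set w1 := pref K z.
have hK : forall w, size w <= K -> forall y, inb w (app w1 y) = inb w z.
  by move=> w hw y; rewrite inb_pref.
have hcv : size (c ++ v) <= K by rewrite size_cat /K; lia.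
have hu : size u <= K by rewrite /K; lia.
have hc : size c <= K by rewrite /K; lia.
case h1: (inb u z).
  exists w1, (u ++ v ++ map s (drop (size u) w1)), s; split; first by left.
  split; first exact/inb_in_ball/inb_pref_self.
  move=> y; rewrite /Sm hK // h1 shift_app ?size_pref // actw_app !app_cat //.
case h2: (inb (c ++ v) z).
  exists w1, (c ++ drop (size (c ++ v)) w1), 1%g; split; first by right.
  split; first exact/inb_in_ball/inb_pref_self.
  move=> y; rewrite /Sm !hK // h1 h2 shift_app ?size_pref // actw1 app_cat //.
case h3: (inb c z).
  exists w1, (u ++ drop (size c) w1), 1%g; split; first by right.
  split; first exact/inb_in_ball/inb_pref_self.
  move=> y; rewrite /Sm !hK // h1 h2 h3 shift_app ?size_pref // actw1 !app_cat //.
exists w1, w1, 1%g; split; first by right.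
split; first exact/inb_in_ball/inb_pref_self.
by move=> y; rewrite /Sm !hK // h1 h2 h3 actw1.
Qed.

End Maps.


Section Germs.
Variable d : nat.
Variable H : {group {perm 'I_d}}.
Variable x : word d.
Implicit Types (y z : word d) (w u v c : seq 'I_d) (s t : {perm 'I_d}).

Definition data s N M := forall i, x (M + i) = s (x (N + i)).
Definition Rep (g : word d -> word d) s N M :=
  forall y, g (sp N x y) = sp M x (actw s y).

Lemma data_ext s N M k : data s N M -> data s (N + k) (M + k).
Proof. by move=> h i; rewrite -!addnA h. Qed.

Lemma data_inv s N M : data s N M -> data s^-1 M N.
Proof. by move=> h i; rewrite h permK. Qed.

Lemma data_comp s2 N2 M2 s1 N1 M1 : data s2 N2 M2 -> data s1 N1 M1 ->
  data (s2 * s1) (N2 + N1) (M1 + M2).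
Proof.
move=> h2 h1 i; rewrite permM -addnA h1 (addnC N1) -addnA h2.
by rewrite -addnA (addnC N1) addnA.
Qed.

Lemma sp_split a b y : sp (a + b) x y = sp a x (sp b (shift a x) y).
Proof.
apply: functional_extensionality => n; rewrite /sp /shift.
case: ifP => h1; case: ifP => h2 //; try lia.
  by rewrite ifT; [congr x; lia | lia].
by rewrite ifF; [congr y; lia | lia].
Qed.

Lemma sp_data s N M K y : data s N M ->
  sp M x (actw s (sp K (shift N x) y)) = sp (M + K) x (actw s y).
Proof.
move=> hd; apply: functional_extensionality => n; rewrite /sp /shift /actw.
case: ifP => h1; case: ifP => h2 //; try lia.
  case: ifP => h3; last lia.
  have -> : n = M + (n - M) by lia.
  by rewrite hd; congr (s (x _)); lia.
by rewrite ifF; [congr (s (y _)); lia | lia].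
Qed.

Lemma sp_self N : sp N x (shift N x) = x.
Proof.
by apply: functional_extensionality => n; rewrite /sp /shift; case: ifP => // h; congr x; lia.
Qed.

Lemma rep_fix g s N M : Rep g s N M -> data s N M -> g x = x.
Proof.
move=> hr hd; have -> : g x = g (sp N x (shift N x)) by rewrite sp_self.
rewrite hr.
apply: functional_extensionality => n; rewrite /sp /shift /actw.
case: ifP => // h; have -> : n = M + (n - M) by lia.
by rewrite hd; congr (s (x _)); lia.
Qed.

Lemma rep_data g s N M : Rep g s N M -> g x = x -> data s N M.
Proof.
move=> hr hx i; have hx' : g (sp N x (shift N x)) = x by rewrite sp_self.
rewrite hr in hx'.
have := f_equal (fun w : word d => w (M + i)) hx'; rewrite /sp /shift /actw ifF; last lia.
by move=> <-; congr (s (x _)); lia.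
Qed.

Lemma rep_comp g h sg N1 M1 sh N2 M2 :
  Rep g sg N1 M1 -> data sg N1 M1 -> Rep h sh N2 M2 -> data sh N2 M2 ->
  Rep (fun y => g (h y)) (sh * sg) (N2 + N1) (M1 + M2).
Proof.
move=> rg dg rh dh y; rewrite sp_split rh sp_data // addnC sp_split rg sp_data //.
by rewrite actwM.
Qed.

Lemma rep_eval g s N M : Rep g s N M ->
  forall K y i, g (sp (N + K) x y) (M + K + i) = s (y i).
Proof.
move=> hr K y i; rewrite sp_split hr /sp /actw ifF; last lia.
rewrite ifF; last lia. by congr (s (y _)); lia.
Qed.

Lemma rep_unique g s N M s' N' M' : 2 <= d ->
  Rep g s N M -> Rep g s' N' M' -> s = s' /\ N + M' = N' + M.
Proof.
move=> hd r1 r2.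
have e1 := rep_eval r1 N'; have e2 := rep_eval r2 N.
have E : forall y i j, M + N' + i = M' + N + j -> s (y i) = s' (y j).
  by move=> y i j hij; rewrite -e1 -e2 hij addnC.
pose a : 'I_d := Ordinal (ltn_trans (ltnSn 0) hd).
pose b1 : 'I_d := Ordinal (ltn_trans (ltnSn 0) hd).
pose b2 : 'I_d := Ordinal hd.
have nb : b1 != b2 by [].
have contra : forall s1 s2 k, 0 < k ->
    (forall y : word d, s1 (y k) = s2 (y 0)) -> False.
  move=> s1 s2 k hk hy.
  have := hy (fun i => if i == 0 then a else b1).
  have := hy (fun i => if i == 0 then a else b2).
  have hk0 : (k == 0) = false by lia. rewrite /= hk0.
  by move=> <- /perm_inj/eqP h; move: nb; rewrite h.
have hP : M + N' = M' + N.
  case: (ltngtP (M + N') (M' + N)) => // h.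
    exfalso; apply: (contra s s' (M' + N - (M + N'))); first lia.
    by move=> y; apply: E; lia.
  exfalso; apply: (contra s' s (M + N' - (M' + N))); first lia.
  by move=> y; symmetry; apply: E; lia.
split; last lia.
apply/permP => e; have := E (fun _ => e) 0 0; rewrite hP => /(_ erefl) //.
Qed.

Lemma inb_pref_eq w z : inb w z -> w = pref (size w) z.
Proof. by move/eqP. Qed.

Lemma gamma_rep g : inGamma H x g -> exists s N M, s \in H /\ Rep g s N M.
Proof.
move=> [[_ hl] hx]; have [w1 [w2 [s [hs [hb he]]]]] := hl x.
move/inb_in_ball: hb => hb.
have hx' : app w2 (actw s (shift (size w1) x)) = x by rewrite -he app_shift.
have hb2 : inb w2 x by rewrite -hx' inb_app_self.
exists s, (size w1), (size w2); split=> // y.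
by rewrite -!app_pref -!inb_pref_eq.
Qed.

Lemma N_rep g : inGamma H x g -> (inN H x g <-> exists N, Rep g 1 N N).
Proof.
move=> hg; split.
  move=> [_ [n hn]]; exists n => y; rewrite actw1; apply: hn => i hi.
  by rewrite /sp hi.
move=> [N hN]; split=> //; exists N => y hy.
have -> : y = sp N x (shift N y).
  apply: functional_extensionality => n; rewrite /sp /shift.
  by case: ifP => h; [rewrite hy | congr y; lia].
by rewrite hN actw1.
Qed.

End Germs.


Section Real.
Variable d : nat.
Variable H : {group {perm 'I_d}}.
Variable x : word d.
Implicit Types (y z : word d) (w u v c : seq 'I_d) (s t : {perm 'I_d}).

Definition Fm w s z := if inb w z then app w (actw s (shift (size w) z)) else z.

Lemma FK w s : cancel (Fm w s) (Fm w s^-1).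
Proof.
move=> z; rewrite /Fm; case h: (inb w z); last by rewrite h.
by rewrite inb_app_self shift_app_size actwK app_shift.
Qed.

Lemma locform_F w s : locform (fun t => t = s \/ t = 1%g) (Fm w s).
Proof.
move=> z; set w1 := pref (size w) z.
case h: (inb w z).
  exists w1, w1, s; split; first by left.
  split; first exact/inb_in_ball/inb_pref_self.
  move=> y; rewrite /Fm inb_pref // h /w1.
  have -> : pref (size w) z = w by move/eqP: h.
  by rewrite shift_app_size.
exists w1, w1, 1%g; split; first by right.
split; first exact/inb_in_ball/inb_pref_self.
by move=> y; rewrite /Fm inb_pref // h actw1.
Qed.

Lemma locform_inV g s ginv P : s \in H -> locform (fun t => t = s \/ t = 1%g) g ->
  locform P ginv -> cancel g ginv -> cancel ginv g -> inV H g.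
Proof.
move=> hs hl hl' c1 c2; split; first exact: locform_homeo hl hl' c1 c2.
move=> z; have [w1 [w2 [t [ht rest]]]] := hl z; exists w1, w2, t; split=> //.
by case: ht => ->; rewrite ?group1.
Qed.

Lemma pref_cat a k : pref a x ++ mkseq (fun i => x (a + i)) k = pref (a + k) x.
Proof.
apply: (@eq_from_nth _ (x 0)); first by rewrite size_cat !size_mkseq.
move=> i; rewrite size_cat !size_mkseq => hi; rewrite nth_cat size_mkseq.
rewrite [RHS]nth_mkseq //; case: ifP => h; first by rewrite nth_mkseq.
by rewrite nth_mkseq; [congr x; lia | lia].
Qed.

Lemma realize s N M : 2 <= d -> s \in H -> data x s N M ->
  exists g N' M', inGamma H x g /\ Rep x g s N' M' /\ N' + M = N + M'.
Proof.
move=> hd hs hdat.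
have hdat1 := data_ext 1 hdat.
pose b0 : 'I_d := Ordinal (ltn_trans (ltnSn 0) hd).
pose b1 : 'I_d := Ordinal hd.
pose b : 'I_d := if x 0 == b0 then b1 else b0.
have hb : b != x 0.
  rewrite /b; case: (x 0 =P b0) => [->|/eqP h]; first by [].
  by rewrite eq_sym.
pose c := [:: b].
have disjP : forall K, 0 < K -> forall z, inb (pref K x) z -> inb c z -> False.
  move=> K hK z /inbP h1 /inbP h2.
  have := h1 0; rewrite size_pref => /(_ hK); rewrite nth_pref // => e1.
  have := h2 0 erefl; rewrite /= => e2.
  by move: hb; rewrite -e1 e2 eqxx.
exists (if N == M then Fm (pref (N + 1) x) s else if M < N then
   Tm (pref (M + 1) x) c (mkseq (fun i => x (M + 1 + i)) (N - M)) s else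
   Sm (pref (N + 1) x) c (mkseq (fun i => x (N + 1 + i)) (M - N)) s), (N + 1), (M + 1).
have REP : Rep x (if N == M then Fm (pref (N + 1) x) s else if M < N then
   Tm (pref (M + 1) x) c (mkseq (fun i => x (M + 1 + i)) (N - M)) s else
   Sm (pref (N + 1) x) c (mkseq (fun i => x (N + 1 + i)) (M - N)) s) s (N + 1) (M + 1).
  move=> y; rewrite -!app_pref; case: eqP => [<-|hne].
    by rewrite /Fm inb_app_self shift_app_size.
  case: ifP => hlt.
    have -> : N + 1 = M + 1 + (N - M) by lia.
    by rewrite -(pref_cat (M+1) (N-M)) /Tm inb_app_self shift_app_size.
  have -> : M + 1 = N + 1 + (M - N) by lia.
  by rewrite -(pref_cat (N+1) (M-N)) /Sm inb_app_self shift_app_size app_cat.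
split; last by split => //; lia.
split; last exact: rep_fix REP hdat1.
have hinvF : forall (w : seq 'I_d), cancel (Fm w s^-1) (Fm w s).
  by move=> w z; have := FK w (s^-1)%g z; rewrite invgK.
case: eqP => [_|hne].
  exact: (locform_inV hs (locform_F _ s) (locform_F _ s^-1) (FK _ s) (hinvF _)).
case: ifP => hlt.
  have hD : forall z, inb (pref (M + 1) x) z -> inb c z -> False by apply: disjP; lia.
  apply: (locform_inV hs (locform_T _ _ _ s) (locform_S _ _ _ s^-1)).
    exact: TSK hD s.
  exact: STK hD s.
have hD : forall z, inb (pref (N + 1) x) z -> inb c z -> False by apply: disjP; lia.
apply: (locform_inV hs (locform_S _ _ _ s) (locform_T _ _ _ s^-1)).
  by move=> z; have := @STK _ _ _ _ hD (s^-1)%g z; rewrite invgK.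
by move=> z; have := @TSK _ _ _ _ hD (s^-1)%g z; rewrite invgK.
Qed.

End Real.


Section Per.
Variable d : nat.
Variable H : {group {perm 'I_d}}.
Variable x : word d.
Implicit Types (y z : word d) (w u v c : seq 'I_d) (s t : {perm 'I_d}).

Lemma per_ev M p : 0 < p -> (forall i, x (M + p + i) = x (M + i)) -> eventually_periodic x.
Proof.
move=> hp hper.
have hk : forall k i, x (M + k * p + i) = x (M + i).
  elim=> [|k IH] i; first by rewrite mul0n addn0.
  rewrite mulSn (_ : M + (p + k * p) + i = M + p + (k * p + i)); last lia.
  by rewrite hper addnA IH.
exists (pref M x), (mkseq (fun i => x (M + i)) p); split; first by rewrite size_mkseq.
apply: functional_extensionality => n; rewrite /app size_pref /periodic_word size_mkseq.
case: ifP => h; first by rewrite nth_pref.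
rewrite nth_mkseq ?ltn_pmod //.
by rewrite {1}(_ : n = M + (n - M) %/ p * p + (n - M) %% p) ?hk //; have := divn_eq (n - M) p; lia.
Qed.

Lemma data_ev s N M : data x s N M -> M < N -> eventually_periodic x.
Proof.
move=> hd hlt; set e := N - M; set r := #[(s^-1)%g]%g.
have step : forall i, x (M + e + i) = (s^-1)%g (x (M + i)).
  by move=> i; rewrite hd permK; congr x; lia.
have hk : forall k i, x (M + k * e + i) = ((s^-1) ^+ k)%g (x (M + i)).
  elim=> [|k IH] i; first by rewrite mul0n addn0 expg0 perm1.
  rewrite expgSr permM -IH; have -> : M + k.+1 * e + i = M + e + (k * e + i) by rewrite mulSn; lia.
  by rewrite step addnA.
apply: (@per_ev M (r * e)); first by rewrite muln_gt0 order_gt0 /e; lia.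
by move=> i; rewrite hk expg_order perm1.
Qed.

Lemma data_noper s N M : ~ eventually_periodic x -> data x s N M -> N = M.
Proof.
move=> hn hd; case: (ltngtP M N) => // h; exfalso; apply: hn.
  exact: data_ev hd h.
exact: data_ev (data_inv hd) h.
Qed.

Lemma ev_data : eventually_periodic x -> exists N M, M < N /\ data x 1%g N M.
Proof.
move=> [u [v [hv hx]]]; exists (size u + size v), (size u); split; first lia.
move=> i; rewrite perm1 hx /app ifF; last lia. rewrite ifF; last lia.
  rewrite /periodic_word; congr nth; rewrite -addnA !(addnC (size u)) !addnK.
  by rewrite modnDl.
Qed.

Lemma inHx_inv h : inHx H x h -> inHx H x h^-1.
Proof.
move=> [hH hf]; split; first by rewrite groupV.
by move=> a ha; rewrite -{1}(hf a ha) permK.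
Qed.

Lemma data_fix_inHx s N : s \in H -> data x s N N -> inHx H x s.
Proof.
move=> hs hd; split=> // a ha; have [i [hi <-]] := ha N.
by have := hd (i - N); rewrite subnKC.
Qed.

Lemma inHx_tail h : inHx H x h -> exists N, data x h N N.
Proof.
move=> [_ hf].
pose Nf (a : 'I_d) := epsilon (inhabits 0) (fun N => forall i, N <= i -> x i <> a).
pose N := (\max_(a : 'I_d) Nf a)%N.
have hN : forall a, Nf a <= N by move=> a; exact: leq_bigmax.
exists N => i.
case: (classic (inf_often x (x (N + i)))) => hio; first by rewrite hf.
exfalso.
have ex : exists N0, forall j, N0 <= j -> x j <> x (N + i).
  apply: NNPP => hne; apply: hio => N0; apply: NNPP => hne2; apply: hne.
  exists N0 => j hj e; apply: hne2; by exists j.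
have := epsilon_spec (inhabits 0) _ ex; rewrite -/(Nf _) => /(_ (N + i)); apply; last by [].
apply: leq_trans (leq_addr i _); exact: hN.
Qed.

End Per.

Import GRing.Theory Num.Theory.

Section Zpow.
Variable d : nat.
Implicit Types (s t : {perm 'I_d}).
Local Open Scope ring_scope.

Definition zpow s (j : int) : {perm 'I_d} := (s ^+ `|(j %% (#[s]%g)%:Z)%Z|%N)%g.

Lemma zpow_eq s (n : nat) (j : int) :
  ((n%:Z) %% (#[s]%g)%:Z = j %% (#[s]%g)%:Z)%Z -> zpow s j = (s ^+ n)%g.
Proof.
move=> h; rewrite /zpow -(expg_mod_order s n) -(expg_mod_order s `|_|%N).
congr (_ ^+ _)%g; apply/eqP; rewrite -eqz_nat -!modz_nat.
have hr : (#[s]%g)%:Z != 0 by rewrite eqz_nat -lt0n order_gt0.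
rewrite abszE ger0_norm ?modz_ge0 // modz_mod h //.
Qed.

Lemma zpowD s (a b : int) : zpow s (a + b) = (zpow s a * zpow s b)%g.
Proof.
rewrite [zpow s a]/zpow [zpow s b]/zpow -expgD; apply: zpow_eq.
have hr : (#[s]%g)%:Z != 0 by rewrite eqz_nat -lt0n order_gt0.
by rewrite PoszD !abszE !ger0_norm ?modz_ge0 // modzDm.
Qed.

Lemma zpow_nat s (k : nat) : zpow s k%:Z = (s ^+ k)%g.
Proof. by apply: zpow_eq. Qed.

Lemma zpow0 s : zpow s 0 = 1%g.
Proof. by rewrite zpow_nat expg0. Qed.

Lemma zpowN s (a : int) : zpow s (- a) = (zpow s a)^-1%g.
Proof.
apply: (@mulgI _ (zpow s a)); rewrite -zpowD subrr zpow0; by rewrite mulgV.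
Qed.

Lemma zpow_neg s (k : nat) : zpow s (Negz k) = ((s ^+ k.+1)^-1)%g.
Proof. by rewrite NegzE zpowN zpow_nat. Qed.

Lemma zpow_in (H : {group {perm 'I_d}}) s j : s \in H -> zpow s j \in H.
Proof. by move=> h; rewrite groupX. Qed.

Lemma zact_conj s (j : int) h :
  zact (fun h => (h ^ s)%g) (fun h => (h ^ s^-1)%g) j h = (h ^ zpow s j)%g.
Proof.
case: j => k; rewrite /zact.
  rewrite zpow_nat; elim: k => [|k IH]; first by rewrite expg0 conjg1.
  by rewrite iterS IH expgSr conjgM.
rewrite zpow_neg -expVgn; move: k.+1 => n; elim: n => [|n IH]; first by rewrite expg0 conjg1.
by rewrite iterS IH expgSr conjgM.
Qed.

End Zpow.


Section Main.
Variable d : nat.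
Variable H : {group {perm 'I_d}}.
Variable x : word d.
Hypothesis hd : 2 <= d.

Definition rep (g : word d -> word d) : {perm 'I_d} * nat * nat :=
  epsilon (inhabits (1%g, 0, 0))
    (fun p : {perm 'I_d} * nat * nat => p.1.1 \in H /\ Rep x g p.1.1 p.1.2 p.2).

Lemma repP g s N M : s \in H -> Rep x g s N M ->
  (rep g).1.1 \in H /\ Rep x g (rep g).1.1 (rep g).1.2 (rep g).2.
Proof.
move=> hs hr.
exact: (@epsilon_spec _ (inhabits (1%g, 0, 0))
    (fun p : {perm 'I_d} * nat * nat => p.1.1 \in H /\ Rep x g p.1.1 p.1.2 p.2)
    (ex_intro _ (s, N, M) (conj hs hr))).
Qed.

Lemma repU g s N M : s \in H -> Rep x g s N M ->
  (rep g).1.1 = s /\ ((rep g).1.2 + M = N + (rep g).2)%N.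
Proof.
move=> hs hr; have [_ hr'] := repP hs hr.
have [e1 e2] := rep_unique hd hr' hr; split=> //.
Qed.

Lemma repG g : inGamma H x g ->
  (rep g).1.1 \in H /\ Rep x g (rep g).1.1 (rep g).1.2 (rep g).2 /\
  data x (rep g).1.1 (rep g).1.2 (rep g).2.
Proof.
move=> hg; have [s [N [M [hs hr]]]] := gamma_rep hg.
have [h1 h2] := repP hs hr; do 2!split=> //.
exact: rep_data h2 hg.2.
Qed.

Lemma data_fix_inHx' s N M : s \in H -> data x s N M -> N = M -> inHx H x s.
Proof. by move=> hs hd' e; subst; apply: data_fix_inHx hd'. Qed.

Lemma nonper : ~ eventually_periodic x ->
  germ_iso H x (inHx H x) (fun s t => (s * t)%g) 1%g.
Proof.
move=> hn; exists (fun g => ((rep g).1.1)^-1)%g; split; [|split; [|split]].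
- move=> g hg; have [hs [hr hdt]] := repG hg.
  by apply: inHx_inv; apply: data_fix_inHx' hs hdt (data_noper hn hdt).
- move=> k hk; have [N hN] := inHx_tail (inHx_inv hk).
  have hkH : (k^-1)%g \in H by rewrite groupV; case: hk.
  have [g [N' [M' [hg [hr _]]]]] := realize hd hkH hN.
  by exists g; split=> //; have [-> _] := repU hkH hr; rewrite invgK.
- move=> g h hg hh; have [hsg [hrg hdg]] := repG hg; have [hsh [hrh hdh]] := repG hh.
  have hc := rep_comp hrg hdg hrh hdh.
  by have [-> _] := repU (groupM hsh hsg) hc; rewrite invgM.
- move=> g hg; rewrite N_rep //; have [hs [hr hdt]] := repG hg; split.
    move/eqP; rewrite invg_eq1 => /eqP e1; exists (rep g).1.2.
    by have e2 := data_noper hn hdt; rewrite {2}e2 -e1.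
  move=> [N hN]; by have [-> _] := repU (group1 H) hN; rewrite invg1.
Qed.

End Main.

Import GRing.Theory.

Section Main2.
Variable d : nat.
Variable H : {group {perm 'I_d}}.
Variable x : word d.
Hypothesis hd : 2 <= d.

Lemma per : eventually_periodic x ->
     exists alpha alphai : {perm 'I_d} -> {perm 'I_d},
       is_aut_Hx H x alpha alphai /\
       germ_iso H x (fun p : {perm 'I_d} * int => inHx H x p.1)
                (sd_mul alpha alphai) (1%g, 0%R).
Proof.
move=> hp; have [N1 [M1 [hlt1 hd1]]] := ev_data hp.
pose P e := (0 < e /\ exists s N M, s \in H /\ data x s N M /\ N = M + e)%N.
pose Pb e := if excluded_middle_informative (P e) then true else false.
have PbP : forall e, Pb e -> P e by move=> e; rewrite /Pb; case: excluded_middle_informative.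
have PPb : forall e, P e -> Pb e by move=> e h; rewrite /Pb; case: excluded_middle_informative.
have exP : exists e, Pb e.
  exists (N1 - M1); apply: PPb; split; first lia.
  by exists 1%g, N1, M1; split; [exact: group1 | split => //; lia].
case: (ex_minnP exP) => m /PbP [hm0 [s0 [N0 [M0 [hs0 [hd0 hN0]]]]]] hmin.
have hmin' : forall e, P e -> (m <= e)%N by move=> e /PPb; apply: hmin.
have tpow : forall q, exists A B, data x (s0 ^+ q)%g A B /\ A = (B + q * m)%N.
  elim=> [|q [A [B [hA hAB]]]].
    by exists 0%N, 0%N; split; [move=> i; rewrite expg0 perm1 | lia].
  exists (A + N0)%N, (M0 + B)%N; split; last lia.
  by rewrite expgSr; exact: data_comp hA hd0.
have hdiv : forall s N M, s \in H -> data x s N M -> (M <= N)%N -> (m %| N - M)%N.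
  move=> s N M hs hdt hle.
  have [A [B [hA hAB]]] := tpow ((N - M) %/ m)%N.
  have hc := data_comp hdt (data_inv hA).
  have hq := divn_eq (N - M) m.
  rewrite /dvdn; apply/eqP; case: (posnP ((N - M) %% m)) => // hr; exfalso.
  have : (m <= (N - M) %% m)%N.
    apply: hmin'; split=> //.
    exists (s * (s0 ^+ ((N - M) %/ m))^-1)%g, (N + B)%N, (A + M)%N; split.
      by rewrite groupM ?groupV ?groupX.
    split=> //; lia.
  by rewrite leqNgt ltn_pmod.
have hdivz : forall s N M, s \in H -> data x s N M -> (m%:Z %| (N%:Z - M%:Z)%R)%Z.
  move=> s N M hs hdt; rewrite dvdzE /=.
  case: (leqP M N) => h; first by rewrite distnEl // (hdiv s).
  rewrite distnEr; last lia.
  by apply: (hdiv (s^-1)%g); [rewrite groupV | exact: data_inv | lia].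
have Zdata : forall j : int, exists A B, data x (zpow s0 j) A B /\
    (A%:Z - B%:Z = j * m%:Z)%R.
  case=> k.
    have [A [B [hA hAB]]] := tpow k; exists A, B; rewrite zpow_nat; split=> //.
    by rewrite hAB PoszD PoszM addrAC GRing.subrr GRing.add0r.
  have [A [B [hA hAB]]] := tpow k.+1; exists B, A; rewrite zpow_neg; split.
    exact: data_inv hA.
  rewrite hAB NegzE PoszD PoszM GRing.mulNr GRing.opprD GRing.addrA GRing.subrr.
  by rewrite GRing.add0r.
have hm0' : (m%:Z != 0)%R by rewrite eqz_nat -lt0n.
pose jj g := ((((rep H x g).1.2)%:Z - ((rep H x g).2)%:Z) %/ m%:Z)%Z.
have ej : forall g, inGamma H x g ->
    (((rep H x g).1.2)%:Z - ((rep H x g).2)%:Z = jj g * m%:Z)%R.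
  move=> g hg; have [hs [hr hdt]] := repG hg.
  by rewrite /jj divzK //; apply: hdivz hdt.
have infS : forall a, inf_often x a -> inf_often x (s0 a) /\ inf_often x ((s0^-1)%g a).
  move=> a ha; split => K.
    have [j [hj e]] := ha (N0 + K); exists (M0 + (j - N0))%N; split; first lia.
    by rewrite hd0 -e; congr (s0 (x _)); lia.
  have [j [hj e]] := ha (M0 + K); exists (N0 + (j - M0))%N; split; first lia.
  have := hd0 (j - M0)%N; rewrite subnKC; last lia.
  by rewrite e => ->; rewrite permK.
exists (fun h => (h ^ s0)%g), (fun h => (h ^ s0^-1)%g); split.
  split; [|split; [|split; [|split]]].
  - move=> h [hH hf]; split; first by rewrite groupJ.
    by move=> a ha; rewrite conjgE !permM hf ?permKV //; exact: (infS a ha).2.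
  - move=> h [hH hf]; split; first by rewrite groupJ ?groupV.
    by move=> a ha; rewrite conjgE !permM invgK hf ?permK //; exact: (infS a ha).1.
  - by move=> h _; rewrite conjgKV.
  - by move=> h _; rewrite conjgK.
  - by move=> h k _ _; rewrite conjMg.
exists (fun g => (((rep H x g).1.1^-1 * zpow s0 (jj g))%g, jj g)).
split; [|split; [|split]].
- move=> g hg /=; have [hs [hr hdt]] := repG hg.
  have [A [B [hA hAB]]] := Zdata (jj g).
  have hc := data_comp (data_inv hA) hdt.
  have hin : inHx H x ((zpow s0 (jj g))^-1 * (rep H x g).1.1)%g.
    apply: (data_fix_inHx' _ hc); first by rewrite groupM ?groupV ?zpow_in.
    have := ej g hg; rewrite -hAB; lia.
  by have := inHx_inv hin; rewrite invMg invgK.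
- move=> [h j] /= hh.
  have [K hK] := inHx_tail (inHx_inv hh).
  have [A [B [hA hAB]]] := Zdata j.
  have hc := data_comp hA hK.
  have hmem : (zpow s0 j * h^-1)%g \in H.
    by rewrite groupM ?groupV ?zpow_in //; case: hh.
  have [g [N' [M' [hg [hr hNM]]]]] := realize hd hmem hc.
  exists g; split=> //.
  have [e1 e2] := repU hd hmem hr.
  have hj : jj g = j.
    rewrite /jj (_ : (_ - _)%R = (j * m%:Z)%R) ?mulzK //.
    rewrite -hAB; lia.
  by rewrite hj e1 invMg invgK -mulgA mulVg mulg1.
- move=> g h hg hh; have [hsg [hrg hdg]] := repG hg.
  have [hsh [hrh hdh]] := repG hh.
  have hc := rep_comp hrg hdg hrh hdh.
  have [e1 e2] := repU hd (groupM hsh hsg) hc.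
  have hj : jj (fun y => g (h y)) = (jj g + jj h)%R.
    rewrite /jj (_ : (_ - _)%R = ((jj g + jj h) * m%:Z)%R) ?mulzK //.
    rewrite GRing.mulrDl -ej // -ej //; lia.
  rewrite /sd_mul /= zact_conj hj e1; congr pair.
  rewrite conjgE !mulgA mulgK invMg -!mulgA; congr mulg; congr mulg.
  by rewrite -zpowD GRing.addrC zpowD.
- move=> g hg; rewrite N_rep //; have [hs [hr hdt]] := repG hg; split.
    move=> [] e1 e2; rewrite e2 zpow0 mulg1 in e1.
    move/eqP: e1; rewrite invg_eq1 => /eqP e1.
    have := ej g hg; rewrite e2 GRing.mul0r => e3.
    exists (rep H x g).1.2; rewrite -e1 {2}(_ : (rep H x g).1.2 = (rep H x g).2) //; lia.
  move=> [N hN]; have [e1 e2] := repU hd (group1 H) hN.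
  have hj : jj g = 0%R by rewrite /jj (_ : (_ - _)%R = 0%R) ?div0z //; lia.
  by rewrite hj e1 invg1 mul1g zpow0.
Qed.

End Main2.


Theorem corollary7p16 (d : nat) (H : {group {perm 'I_d}}) (x : word d) :
  2 <= d ->
  (~ eventually_periodic x ->
     germ_iso H x (inHx H x) (fun s t => (s * t)%g) 1%g) /\
  (eventually_periodic x ->
     exists alpha alphai : {perm 'I_d} -> {perm 'I_d},
       is_aut_Hx H x alpha alphai /\
       germ_iso H x (fun p : {perm 'I_d} * int => inHx H x p.1)
                (sd_mul alpha alphai) (1%g, 0%R)).
Proof.
move=> hd; split; [exact: nonper hd | exact: per hd].
Qed.
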